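(* Let $a,b,c\in C(\mathbb{R}^+)$, let $y\not\equiv0$ be a solution of $\dddot y+a(t)\ddot y+b(t)\dot y+c(t)y=0$, and let $\kappa(t)=x(t)/|x(t)|$ where $x(t)=(y(t),\dot y(t),\ddot y(t))$. Let $[t_0,t_1]\subset\mathbb{R}^+$ be such that $\kappa(t)$ is not a pole $(0,0,\pm1)$ for $t\in[t_0,t_1]$, and write $\kappa(t)=P(\varphi(t),\theta(t))$ with continuous $\varphi,\theta$. Suppose $\varphi(t_0)\equiv\varphi(t_1)\equiv\frac{\pi}{2}\pmod{2\pi}$ and $\varphi(t_1)=\varphi(t_0)-2\pi$. Then there is a continuous curve $\tilde\kappa:[0,1]\to S^2\setminus\Omega$ with $\tilde\kappa(0)=\kappa(t_0)$, $\tilde\kappa(1)=\kappa(t_1)$, whose image is contained in $\kappa([t_0,t_1])$ (i.e. it is obtained from $\kappa|_{[t_0,t_1]}$ by deleting some parts).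
   Context: $S^2$ is the unit sphere in $\mathbb{R}^3$ and $P(\varphi,\theta)=(\cos\theta\cos\varphi,\cos\theta\sin\varphi,\sin\theta)\in S^2$ denotes the point with spherical coordinates $\varphi$ (longitude) and $\theta\in[-\pi/2,\pi/2]$ (latitude); thus $y=|x|\cos\theta\cos\varphi$, $\dot y=|x|\cos\theta\sin\varphi$, $\ddot y=|x|\sin\theta$. $\Omega=\{(x_0,x_1,x_2)\in S^2: x_0x_2-x_1^2>0\}$. *)

(* Defs.v *)
From Stdlib Require Import Reals ZArith.
From Coquelicot Require Import Coquelicot.
Open Scope R_scope.

Definition pt3 := (R * R * R)%type.

Definition Psph (phi theta : R) : pt3 :=
  (cos theta * cos phi, cos theta * sin phi, sin theta).

Definition sqnorm3 (p : pt3) : R :=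
  let '(x0, x1, x2) := p in x0 ^ 2 + x1 ^ 2 + x2 ^ 2.

Definition norm3 (p : pt3) : R := sqrt (sqnorm3 p).

Definition InS2 (p : pt3) : Prop := sqnorm3 p = 1.

Definition InOmega (p : pt3) : Prop :=
  InS2 p /\ (let '(x0, x1, x2) := p in x0 * x2 - x1 ^ 2 > 0).

Definition kappa (y dy ddy : R -> R) (t : R) : pt3 :=
  let n := norm3 (y t, dy t, ddy t) in
  (y t / n, dy t / n, ddy t / n).

Definition north_pole : pt3 := (0, 0, 1).
Definition south_pole : pt3 := (0, 0, -1).

Definition cont_on {V : UniformSpace} (f : R -> V) (u v : R) : Prop :=
  forall t, u <= t <= v ->
    filterlim f (within (fun s => u <= s <= v) (locally t)) (locally (f t)).

(* Main.v *)
Require Import Defs.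
From Stdlib Require Import Reals ZArith Lra Lia Classical ClassicalEpsilon.
From Coquelicot Require Import Coquelicot.
Open Scope R_scope.

Definition cc (f : R -> R) (a b : R) : Prop :=
  forall t, a <= t <= b -> forall e, 0 < e -> exists d, 0 < d /\
    forall s, a <= s <= b -> Rabs (s - t) < d -> Rabs (f s - f t) < e.

Lemma cc_limit f a b t : cc f a b -> a <= t <= b ->
  limit1_in f (fun s => a <= s <= b) (f t) t.
Proof.
  intros H Ht e He. destruct (H t Ht e He) as [d [Hd H1]].
  exists d; split; auto. intros x [Hx Hx2]. simpl in *. unfold R_dist in *. auto.
Qed.

Lemma limit_cc f a b : (forall t, a <= t <= b -> limit1_in f (fun s => a <= s <= b) (f t) t) -> cc f a b.
Proof.
  intros H t Ht e He. destruct (H t Ht e He) as [d [Hd H1]].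
  exists d; split; auto. intros s Hs Hst. apply (H1 s). split; auto.
Qed.

Lemma cc_mult f g a b : cc f a b -> cc g a b -> cc (fun x => f x * g x) a b.
Proof.
  intros Hf Hg. apply limit_cc. intros t Ht.
  apply limit_mul; apply cc_limit; auto.
Qed.

Lemma cc_comp g f a b : (forall x, continuity_pt g x) -> cc f a b -> cc (fun x => g (f x)) a b.
Proof.
  intros Hg Hf t Ht e He.
  destruct (Hg (f t) e He) as [d1 [Hd1 H1]].
  destruct (Hf t Ht d1 Hd1) as [d [Hd H2]].
  exists d; split; auto. intros s Hs Hst.
  destruct (Req_dec (f t) (f s)) as [E|E].
  - rewrite E. rewrite Rminus_diag, Rabs_R0. auto.
  - apply (H1 (f s)). split. split. exact I. exact E. simpl. unfold R_dist. apply H2; auto.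
Qed.

Lemma cc_opp f a b : cc f a b -> cc (fun x => - f x) a b.
Proof.
  intros Hf t Ht e He. destruct (Hf t Ht e He) as [d [Hd H]].
  exists d; split; auto. intros s Hs Hst.
  replace (- f s - - f t) with (- (f s - f t)) by ring. rewrite Rabs_Ropp. auto.
Qed.

Lemma cc_sub f a b a' b' : cc f a b -> a <= a' -> b' <= b -> cc f a' b'.
Proof.
  intros Hf H1 H2 t Ht e He. destruct (Hf t ltac:(lra) e He) as [d [Hd H]].
  exists d; split; auto. intros s Hs Hst. apply H; auto; lra.
Qed.

Lemma cc_compose F h A B a b : cc F A B -> cc h a b ->
  (forall s, a <= s <= b -> A <= h s <= B) -> cc (fun s => F (h s)) a b.
Proof.
  intros HF Hh Hr t Ht e He.
  destruct (HF (h t) (Hr t Ht) e He) as [d1 [Hd1 H1]].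
  destruct (Hh t Ht d1 Hd1) as [d [Hd H2]].
  exists d; split; [auto|]. intros s Hs Hst. apply H1; auto.
Qed.

Lemma cc_affine c k a b : cc (fun s => c + k * s) a b.
Proof.
  intros t Ht e He. exists (e / (Rabs k + 1)). split.
  { apply Rdiv_lt_0_compat; [auto|pose proof (Rabs_pos k); lra]. }
  intros s Hs Hst.
  replace (c + k * s - (c + k * t)) with (k * (s - t)) by ring.
  rewrite Rabs_mult.
  assert (Hk : 0 < Rabs k + 1) by (pose proof (Rabs_pos k); lra).
  apply Rle_lt_trans with ((Rabs k + 1) * Rabs (s - t)).
  { apply Rmult_le_compat_r. apply Rabs_pos. lra. }
  replace e with ((Rabs k + 1) * (e / (Rabs k + 1))) by (field; lra).
  apply Rmult_lt_compat_l; auto.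
Qed.

Lemma cc_glue f g a m b : a <= m <= b -> cc f a m -> cc g m b -> f m = g m ->
  cc (fun s => if Rle_dec s m then f s else g s) a b.
Proof.
  intros Hm Hf Hg Heq t Ht e He.
  destruct (Rle_dec t m) as [Htm|Htm].
  - destruct (Hf t ltac:(lra) e He) as [d1 [Hd1 H1]].
    destruct (Hg m ltac:(lra) e He) as [d2 [Hd2 H2]].
    destruct (Hf m ltac:(lra) (e/2) ltac:(lra)) as [d3 [Hd3 H3]].
    destruct (Hg m ltac:(lra) (e/2) ltac:(lra)) as [d4 [Hd4 H4]].
    exists (Rmin d1 (Rmin d3 d4)). split. { repeat apply Rmin_pos; auto. }
    intros s Hs Hst.
    assert (Hm1 : Rmin d1 (Rmin d3 d4) <= d1) by apply Rmin_l.
    assert (Hm2 : Rmin d1 (Rmin d3 d4) <= d3) by (eapply Rle_trans; [apply Rmin_r|apply Rmin_l]).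
    assert (Hm3 : Rmin d1 (Rmin d3 d4) <= d4) by (eapply Rle_trans; [apply Rmin_r|apply Rmin_r]).
    destruct (Rle_dec s m) as [Hsm|Hsm].
    + apply H1; [lra|]. lra.
    +
      assert (A1 : Rabs (g s - g m) < e/2) by (apply H4; [lra|]; apply Rabs_def1; apply Rabs_def2 in Hst; lra).
      assert (A2 : Rabs (f t - f m) < e/2) by (apply H3; [lra|]; apply Rabs_def1; apply Rabs_def2 in Hst; lra).
      rewrite <- Heq in A1. apply Rabs_def2 in A1. apply Rabs_def2 in A2. apply Rabs_def1; lra.
  - destruct (Hg t ltac:(lra) e He) as [d1 [Hd1 H1]].
    destruct (Hf m ltac:(lra) (e/2) ltac:(lra)) as [d3 [Hd3 H3]].
    destruct (Hg m ltac:(lra) (e/2) ltac:(lra)) as [d4 [Hd4 H4]].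
    exists (Rmin (Rmin d1 (t - m)) (Rmin d3 d4)). split. { repeat apply Rmin_pos; auto. lra. }
    intros s Hs Hst.
    assert (Hm1 : Rmin (Rmin d1 (t - m)) (Rmin d3 d4) <= d1) by (eapply Rle_trans; [apply Rmin_l|apply Rmin_l]).
    assert (Hm0 : Rmin (Rmin d1 (t - m)) (Rmin d3 d4) <= t - m) by (eapply Rle_trans; [apply Rmin_l|apply Rmin_r]).
    apply Rabs_def2 in Hst.
    destruct (Rle_dec s m) as [Hsm|Hsm].
    + lra.
    + apply H1; [lra|]. apply Rabs_def1; lra.
Qed.

Lemma cont_on_cc (f : R -> R) a b : cont_on f a b -> cc f a b.
Proof.
  intros H t Ht e He.
  pose proof (proj1 (filterlim_locally f (f t)) (H t Ht) (mkposreal e He)) as H1.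
  destruct H1 as [d H1]. exists d. split. apply cond_pos.
  intros s Hs Hst. apply (H1 s). exact Hst. exact Hs.
Qed.

Lemma cc_cont_on3 f1 f2 f3 a b : cc f1 a b -> cc f2 a b -> cc f3 a b ->
  cont_on (fun s => (f1 s, f2 s, f3 s) : pt3) a b.
Proof.
  intros H1 H2 H3 t Ht. apply filterlim_locally. intros eps.
  destruct (H1 t Ht eps (cond_pos eps)) as [d1 [Hd1 K1]].
  destruct (H2 t Ht eps (cond_pos eps)) as [d2 [Hd2 K2]].
  destruct (H3 t Ht eps (cond_pos eps)) as [d3 [Hd3 K3]].
  exists (mkposreal _ (Rmin_pos _ _ Hd1 (Rmin_pos _ _ Hd2 Hd3))).
  intros s Hst Hs. simpl in Hst.
  change (Rabs (s - t) < Rmin d1 (Rmin d2 d3)) in Hst.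
  assert (Rmin d1 (Rmin d2 d3) <= d1) by apply Rmin_l.
  assert (Rmin d1 (Rmin d2 d3) <= d2) by (eapply Rle_trans; [apply Rmin_r|apply Rmin_l]).
  assert (Rmin d1 (Rmin d2 d3) <= d3) by (eapply Rle_trans; [apply Rmin_r|apply Rmin_r]).
  split; [split|].
  - change (Rabs (f1 s - f1 t) < eps). apply K1; auto; lra.
  - change (Rabs (f2 s - f2 t) < eps). apply K2; auto; lra.
  - change (Rabs (f3 s - f3 t) < eps). apply K3; auto; lra.
Qed.
Lemma sup_level f a b s c : cc f a b -> a <= s <= b -> f a <= c ->
  exists r, a <= r <= s /\ f r <= c /\ (forall t, r < t <= s -> f t > c).
Proof.
  intros Hf Hs Ha.
  set (E := fun t => a <= t <= s /\ f t <= c).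
  assert (Hb : bound E) by (exists s; intros x [Hx _]; lra).
  assert (He : exists x, E x) by (exists a; split; [lra|auto]).
  destruct (completeness E Hb He) as [r [Hub Hlub]].
  assert (Har : a <= r) by (apply Hub; split; [lra|auto]).
  assert (Hrs : r <= s) by (apply Hlub; intros x [Hx _]; lra).
  exists r. split; [lra|]. split.
  - apply Rnot_lt_le. intro Hc.
    destruct (Hf r ltac:(lra) (f r - c) ltac:(lra)) as [d [Hd H]].
    assert (r <= r - d/2); [|lra].
    apply Hlub. intros x [Hx Hfx]. apply Rnot_lt_le. intro Hx2.
    assert (Hxr : x <= r) by (apply Hub; split; auto).
    assert (K : Rabs (f x - f r) < f r - c) by (apply H; [lra|]; apply Rabs_def1; lra).
    apply Rabs_def2 in K. lra.
  - intros t Ht. apply Rnot_le_lt. intro Hft.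
    assert (t <= r) by (apply Hub; split; [lra|auto]). lra.
Qed.

Lemma sup_level2 f a b s c : cc f a b -> a <= s <= b -> f a <= c -> c <= f s ->
  exists r, a <= r <= s /\ f r = c /\ (forall t, r < t <= s -> f t > c).
Proof.
  intros Hf Hs Ha Hc.
  destruct (sup_level f a b s c Hf Hs Ha) as [r [Hr [Hfr Hgt]]].
  exists r. split; auto. split; auto.
  destruct (Req_dec r s) as [E|E]. { subst; lra. }
  apply Rle_antisym; auto. apply Rnot_lt_le. intro Hlt.
  destruct (Hf r ltac:(lra) (c - f r) ltac:(lra)) as [d [Hd H]].
  set (t := Rmin (r + d/2) s).
  assert (Ht1 : t <= r + d/2) by apply Rmin_l.
  assert (Ht2 : t <= s) by apply Rmin_r.
  assert (Ht3 : r < t) by (unfold t; apply Rmin_glb_lt; lra).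
  assert (K : Rabs (f t - f r) < c - f r) by (apply H; [lra|]; apply Rabs_def1; lra).
  apply Rabs_def2 in K. specialize (Hgt t ltac:(lra)). lra.
Qed.

Lemma IVT_up f a b c : cc f a b -> a <= b -> f a <= c -> c <= f b ->
  exists t, a <= t <= b /\ f t = c.
Proof.
  intros Hf Hab Ha Hb.
  destruct (sup_level2 f a b b c Hf ltac:(lra) Ha Hb) as [r [Hr [Hfr _]]].
  exists r; split; auto; lra.
Qed.

Lemma IVT_down f a b c : cc f a b -> a <= b -> c <= f a -> f b <= c ->
  exists t, a <= t <= b /\ f t = c.
Proof.
  intros Hf Hab Ha Hb.
  destruct (IVT_up (fun x => - f x) a b (- c) (cc_opp f a b Hf) Hab ltac:(lra) ltac:(lra)) as [t [Ht E]].
  exists t; split; auto; lra.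
Qed.

Definition locdec (f : R -> R) (a b t : R) : Prop :=
  exists d, 0 < d /\ forall s, a <= s <= b ->
    (t < s < t + d -> f s < f t) /\ (t - d < s < t -> f s > f t).

Definition locinc (f : R -> R) (a b t : R) : Prop :=
  exists d, 0 < d /\ forall s, a <= s <= b ->
    (t < s < t + d -> f s > f t) /\ (t - d < s < t -> f s < f t).

Lemma cross_down f a b c : cc f a b -> a <= b -> f a <= c ->
  (forall t, a <= t <= b -> f t = c -> locdec f a b t) ->
  forall s, a < s <= b -> f s < c.
Proof.
  intros Hf Hab Ha Hloc.
  assert (Strict : forall s, a < s <= b -> f s > c -> False).
  { intros s Hs Hfs.
    destruct (sup_level2 f a b s c Hf ltac:(lra) Ha ltac:(lra)) as [r [Hr [Hfr Hgt]]].
    assert (Hrs : r < s) by (destruct (Req_dec r s); [subst; lra|lra]).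
    destruct (Hloc r ltac:(lra) Hfr) as [d [Hd H]].
    set (t := Rmin (r + d/2) s).
    assert (Ht1 : t <= r + d/2) by apply Rmin_l.
    assert (Ht2 : t <= s) by apply Rmin_r.
    assert (Ht3 : r < t) by (unfold t; apply Rmin_glb_lt; lra).
    destruct (H t ltac:(lra)) as [K _]. specialize (K ltac:(lra)).
    specialize (Hgt t ltac:(lra)). lra. }
  intros s Hs. apply Rnot_le_lt. intro Hfs.
  destruct (Rle_lt_or_eq_dec c (f s) Hfs) as [Hlt|Heq].
  - apply (Strict s); auto.
  - destruct (Hloc s ltac:(lra) (eq_sym Heq)) as [d [Hd H]].
    set (t := Rmax a (s - d/2)).
    assert (Ht1 : a <= t) by apply Rmax_l.
    assert (Ht2 : s - d/2 <= t) by apply Rmax_r.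
    assert (Ht3 : t < s) by (unfold t; apply Rmax_lub_lt; lra).
    destruct (H t ltac:(lra)) as [_ K]. specialize (K ltac:(lra)).
    destruct (Req_dec t a) as [E|E].
    + rewrite E in K. lra.
    + apply (Strict t); [lra|lra].
Qed.

Lemma small_inv eta : 0 < eta -> exists N : nat, forall n, (N <= n)%nat -> / (INR n + 1) < eta.
Proof.
  intros He. destruct (archimed_cor1 eta He) as [N [HN HN0]].
  exists N. intros n Hn.
  apply Rle_lt_trans with (/ INR N); auto.
  apply Rinv_le_contravar. apply lt_0_INR; auto.
  apply le_INR in Hn. lra.
Qed.

Lemma cluster f g p q a b0 (s : nat -> R) : p <= q -> cc f p q -> cc g p q ->
  (forall n, p <= s n <= q) ->
  (forall n, Rabs (f (s n) - a) < / (INR n + 1)) ->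
  (forall n, g (s n) <= b0 + / (INR n + 1)) ->
  exists l, p <= l <= q /\ f l = a /\ g l <= b0.
Proof.
  intros Hpq Hf Hg Hs Ha Hb.
  destruct (Bolzano_Weierstrass s (fun c => p <= c <= q) (compact_P3 p q) Hs) as [l Hl].
  assert (Close : forall d, 0 < d -> forall N, exists n, (N <= n)%nat /\ Rabs (s n - l) < d).
  { intros d Hd N. destruct (Hl (disc l (mkposreal d Hd)) N) as [n [Hn Hv]].
    - exists (mkposreal d Hd). intros x Hx; exact Hx.
    - exists n; split; auto. }
  assert (Hlp : p <= l <= q).
  { split; apply Rnot_lt_le; intro Hc.
    - destruct (Close (p - l) ltac:(lra) 0%nat) as [n [_ Hn]].
      apply Rabs_def2 in Hn. specialize (Hs n). lra.
    - destruct (Close (l - q) ltac:(lra) 0%nat) as [n [_ Hn]].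
      apply Rabs_def2 in Hn. specialize (Hs n). lra. }
  exists l. split; auto. split.
  - apply NNPP. intro Hne.
    assert (Heta : 0 < Rabs (f l - a)) by (apply Rabs_pos_lt; lra).
    set (eta := Rabs (f l - a)) in *.
    destruct (Hf l Hlp (eta/2) ltac:(lra)) as [d [Hd H]].
    destruct (small_inv (eta/2) ltac:(lra)) as [N HN].
    destruct (Close d Hd N) as [n [Hn Hsn]].
    specialize (H (s n) (Hs n) Hsn). specialize (HN n Hn). specialize (Ha n).
    assert (Rabs (f l - a) <= Rabs (f (s n) - f l) + Rabs (f (s n) - a)).
    { replace (f l - a) with (- (f (s n) - f l) + (f (s n) - a)) by ring.
      eapply Rle_trans; [apply Rabs_triang|]. rewrite Rabs_Ropp. lra. }
    unfold eta in *. lra.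
  - apply Rnot_lt_le. intro Hc.
    set (eta := g l - b0).
    destruct (Hg l Hlp (eta/2) ltac:(unfold eta; lra)) as [d [Hd H]].
    destruct (small_inv (eta/2) ltac:(unfold eta; lra)) as [N HN].
    destruct (Close d Hd N) as [n [Hn Hsn]].
    specialize (H (s n) (Hs n) Hsn). specialize (HN n Hn). specialize (Hb n).
    apply Rabs_def2 in H. unfold eta in *. lra.
Qed.
Lemma cpt_ed f x0 : continuity_pt f x0 -> forall e, 0 < e -> exists d, 0 < d /\
  forall x, Rabs (x - x0) < d -> Rabs (f x - f x0) < e.
Proof.
  intros H e He. destruct (H e He) as [d [Hd H1]]. exists d; split; auto.
  intros x Hx. destruct (Req_dec x0 x) as [E|E].
  - subst. rewrite Rminus_diag, Rabs_R0; auto.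
  - apply (H1 x). split; [split; [exact I|exact E]|exact Hx].
Qed.

Lemma tan_le x y : - (PI/2) < x -> x <= y -> y < PI/2 -> tan x <= tan y.
Proof.
  intros H1 H2 H3. destruct (Req_dec x y) as [E|E]. { subst; lra. }
  left. apply tan_increasing; lra.
Qed.

Lemma locinc_opp f a b t : locinc f a b t -> locdec (fun x => - f x) a b t.
Proof.
  intros [d [Hd H]]. exists d; split; auto. intros s Hs.
  destruct (H s Hs) as [H1 H2]. split; intro; [specialize (H1 H0)|specialize (H2 H0)]; lra.
Qed.

Definition Dv (u th : R) : R := cos u * tan th - sin u ^ 2.

Lemma Dv_cos0 u th : cos u = 0 -> Dv u th = -1.
Proof.
  intro H. unfold Dv. pose proof (sin2_cos2 u). rewrite H in *. unfold Rsqr in *. nra.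
Qed.

Definition HalfHyp (phi theta : R -> R) (p q w : R) : Prop :=
  p <= q /\ cc phi p q /\ cc theta p q /\ cos w = 0 /\ sin w = 1 /\
  (forall t, p <= t <= q -> - (PI/2) < theta t < PI/2) /\
  (forall t, p <= t <= q -> w - PI <= phi t <= w) /\
  phi p = w /\ phi q = w - PI /\
  (forall t, p <= t <= q ->
     (Dv (phi t) (theta t) < 0 -> locdec phi p q t) /\
     (Dv (phi t) (theta t) > 0 -> locinc phi p q t)).

Lemma half_cos phi theta p q w : HalfHyp phi theta p q w ->
  forall u, w - PI <= u <= w -> 0 <= cos u.
Proof.
  intros (_&_&_&Hc&Hs&_) u Hu.
  replace u with (w - (w - u)) by ring. rewrite cos_minus, Hc, Hs.
  replace (0 * cos (w - u) + 1 * sin (w - u)) with (sin (w - u)) by ring.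
  apply sin_ge_0; lra.
Qed.

Lemma half_cosw phi theta p q w : HalfHyp phi theta p q w -> cos (w - PI) = 0.
Proof.
  intros (_&_&_&Hc&Hs&_). rewrite cos_minus, Hc, Hs, sin_PI. ring.
Qed.

Lemma half_pq phi theta p q w : HalfHyp phi theta p q w -> p < q.
Proof.
  intros H. destruct H as (Hpq&_&_&_&_&_&_&Hp&Hq&_).
  destruct (Req_dec p q) as [E|E]; [|lra]. rewrite E in Hp. rewrite Hp in Hq. pose proof PI_RGT_0. lra.
Qed.

Lemma half_S1 phi theta p q w : HalfHyp phi theta p q w ->
  forall u, w - PI <= u <= w -> exists t, p <= t <= q /\ phi t = u /\ Dv u (theta t) <= 0.
Proof.
  intros H u Hu. pose proof (half_pq _ _ _ _ _ H) as Hpq'.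
  destruct H as (Hpq&Hphi&Hth&Hc&Hs&Hr&Hb&Hp&Hq&Hloc).
  apply NNPP. intro Hne.
  destruct (Req_dec u w) as [E|E].
  - apply Hne. exists p. split; [lra|]. split; [congruence|]. rewrite E, Dv_cos0; auto; lra.
  - assert (Hu' : u < w) by lra.
    assert (K : forall s, p < s <= q -> (fun x => - phi x) s < - u).
    { apply (cross_down (fun x => - phi x) p q (- u)); auto.
      - apply cc_opp; auto.
      - rewrite Hp; lra.
      - intros t Ht Et. apply locinc_opp. apply (proj2 (Hloc t Ht)).
        apply Rnot_le_lt. intro HD. apply Hne. exists t. split; auto. split; [lra|].
        replace u with (phi t) by lra. auto. }
    specialize (K q ltac:(lra)). simpl in K. rewrite Hq in K. lra.
Qed.

Lemma half_S2 phi theta p q w : HalfHyp phi theta p q w ->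
  forall u, w - PI <= u <= w -> exists t, p <= t <= q /\ phi t = u /\
    forall t', p <= t' <= q -> phi t' = u -> theta t <= theta t'.
Proof.
  intros H u Hu. destruct (half_S1 _ _ _ _ _ H u Hu) as [t0 [Ht0 [Ht0u _]]].
  destruct H as (Hpq&Hphi&Hth&Hc&Hs&Hr&Hb&Hp&Hq&Hloc).
  set (E := fun x => exists t, p <= t <= q /\ phi t = u /\ x = - theta t).
  assert (Hbd : bound E).
  { exists (PI/2). intros x [t [Ht [_ ->]]]. specialize (Hr t Ht). lra. }
  assert (Hne : exists x, E x) by (exists (- theta t0); exists t0; auto).
  destruct (completeness E Hbd Hne) as [M [Hub Hlub]].
  assert (Hn : forall n : nat, exists t, p <= t <= q /\ phi t = u /\ - theta t > M - / (INR n + 1)).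
  { intro n. apply NNPP. intro Hno.
    assert (Hpos : 0 < / (INR n + 1)) by (apply Rinv_0_lt_compat; pose proof (pos_INR n); lra).
    assert (M <= M - / (INR n + 1)); [|lra].
    apply Hlub. intros x [t [Ht [Htu ->]]]. apply Rnot_lt_le. intro Hlt.
    apply Hno. exists t. repeat split; auto; lra. }
  set (s := fun n : nat => epsilon (inhabits 0) (fun t => p <= t <= q /\ phi t = u /\ - theta t > M - / (INR n + 1))).
  assert (Hsn : forall n, p <= s n <= q /\ phi (s n) = u /\ - theta (s n) > M - / (INR n + 1)).
  { intro n. unfold s. apply epsilon_spec. apply Hn. }
  destruct (cluster phi theta p q u (- M) s Hpq Hphi Hth) as [l [Hl [Hlu Hlm]]].
  - intro n. apply Hsn.
  - intro n. destruct (Hsn n) as [_ [E1 _]]. rewrite E1, Rminus_diag, Rabs_R0.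
    apply Rinv_0_lt_compat; pose proof (pos_INR n); lra.
  - intro n. destruct (Hsn n) as [_ [_ E1]]. lra.
  - exists l. split; auto. split; auto. intros t' Ht' Et'.
    assert (- theta t' <= M) by (apply Hub; exists t'; auto). lra.
Qed.

Definition selt (phi theta : R -> R) (p q u : R) : R :=
  epsilon (inhabits 0) (fun t => p <= t <= q /\ phi t = u /\
    forall t', p <= t' <= q -> phi t' = u -> theta t <= theta t').

Lemma selt_spec phi theta p q w : HalfHyp phi theta p q w ->
  forall u, w - PI <= u <= w ->
  let t := selt phi theta p q u in
  p <= t <= q /\ phi t = u /\
    (forall t', p <= t' <= q -> phi t' = u -> theta t <= theta t') /\
    Dv u (theta t) <= 0.
Proof.
  intros H u Hu t.
  assert (A : p <= t <= q /\ phi t = u /\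
    forall t', p <= t' <= q -> phi t' = u -> theta t <= theta t').
  { unfold t, selt. apply epsilon_spec. apply (half_S2 _ _ _ _ _ H u Hu). }
  destruct A as [A1 [A2 A3]]. split; auto. split; auto. split; auto.
  destruct (half_S1 _ _ _ _ _ H u Hu) as [t' [Ht' [Et' Dt']]].
  pose proof (A3 t' Ht' Et') as Hle.
  pose proof (half_cos _ _ _ _ _ H u Hu) as Hcu.
  destruct H as (Hpq&Hphi&Hth&Hc&Hs&Hr&_).
  unfold Dv in *.
  assert (tan (theta t) <= tan (theta t')).
  { apply tan_le; [apply Hr; auto|auto|apply Hr; auto]. }
  apply Rle_trans with (cos u * tan (theta t') - sin u ^ 2); auto.
  apply Rplus_le_compat_r. apply Rmult_le_compat_l; auto.
Qed.
Lemma half_end1 phi theta p q w : HalfHyp phi theta p q w -> selt phi theta p q w = p.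
Proof.
  intros H. assert (Hw : w - PI <= w <= w) by (pose proof PI_RGT_0; lra).
  destruct (selt_spec _ _ _ _ _ H w Hw) as [Ht [Et _]].
  set (t := selt phi theta p q w) in *.
  destruct H as (Hpq&Hphi&Hth&Hc&Hs&Hr&Hb&Hp&Hq&Hloc).
  destruct (Req_dec t p) as [E|E]; auto. exfalso.
  destruct (proj1 (Hloc t Ht)) as [d [Hd K]].
  { rewrite Et, Dv_cos0; auto; lra. }
  set (s := Rmax p (t - d/2)).
  assert (s1 : p <= s) by apply Rmax_l.
  assert (s2 : t - d/2 <= s) by apply Rmax_r.
  assert (s3 : s < t) by (unfold s; apply Rmax_lub_lt; lra).
  destruct (K s ltac:(lra)) as [_ K2]. specialize (K2 ltac:(lra)).
  specialize (Hb s ltac:(lra)). lra.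
Qed.

Lemma half_end2 phi theta p q w : HalfHyp phi theta p q w -> selt phi theta p q (w - PI) = q.
Proof.
  intros H. assert (Hw : w - PI <= w - PI <= w) by (pose proof PI_RGT_0; lra).
  pose proof (half_cosw _ _ _ _ _ H) as Hcw.
  destruct (selt_spec _ _ _ _ _ H (w - PI) Hw) as [Ht [Et _]].
  set (t := selt phi theta p q (w - PI)) in *.
  destruct H as (Hpq&Hphi&Hth&Hc&Hs&Hr&Hb&Hp&Hq&Hloc).
  destruct (Req_dec t q) as [E|E]; auto. exfalso.
  destruct (proj1 (Hloc t Ht)) as [d [Hd K]].
  { rewrite Et, Dv_cos0; auto; lra. }
  set (s := Rmin q (t + d/2)).
  assert (s1 : s <= q) by apply Rmin_l.
  assert (s2 : s <= t + d/2) by apply Rmin_r.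
  assert (s3 : t < s) by (unfold s; apply Rmin_glb_lt; lra).
  destruct (K s ltac:(lra)) as [K1 _]. specialize (K1 ltac:(lra)).
  specialize (Hb s ltac:(lra)). lra.
Qed.

Lemma half_lower phi theta p q w : HalfHyp phi theta p q w ->
  forall u0, w - PI <= u0 <= w -> forall e, 0 < e -> exists d, 0 < d /\
  forall u, w - PI <= u <= w -> Rabs (u - u0) < d ->
    theta (selt phi theta p q u) > theta (selt phi theta p q u0) - e.
Proof.
  intros H u0 Hu0 e He. apply NNPP. intro Hno.
  set (Th := fun u => theta (selt phi theta p q u)).
  assert (Hn : forall n : nat, exists u, w - PI <= u <= w /\ Rabs (u - u0) < / (INR n + 1) /\ Th u <= Th u0 - e).
  { intro n. apply NNPP. intro Hn. apply Hno. exists (/ (INR n + 1)).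
    split. { apply Rinv_0_lt_compat; pose proof (pos_INR n); lra. }
    intros u Hu Hd. apply Rnot_le_lt. intro Hle. apply Hn. exists u. auto. }
  set (un := fun n : nat => epsilon (inhabits 0) (fun u => w - PI <= u <= w /\ Rabs (u - u0) < / (INR n + 1) /\ Th u <= Th u0 - e)).
  assert (Hun : forall n, w - PI <= un n <= w /\ Rabs (un n - u0) < / (INR n + 1) /\ Th (un n) <= Th u0 - e).
  { intro n. unfold un. apply epsilon_spec. apply Hn. }
  set (s := fun n => selt phi theta p q (un n)).
  assert (Hs : forall n, p <= s n <= q /\ phi (s n) = un n).
  { intro n. destruct (selt_spec _ _ _ _ _ H (un n) (proj1 (Hun n))) as [A [B _]]. auto. }
  destruct (selt_spec _ _ _ _ _ H u0 Hu0) as [_ [_ [Hmin _]]].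
  destruct H as (Hpq&Hphi&Hth&_).
  destruct (cluster phi theta p q u0 (Th u0 - e) s Hpq Hphi Hth) as [l [Hl [Hlu Hlm]]].
  - intro n. apply Hs.
  - intro n. rewrite (proj2 (Hs n)). apply Hun.
  - intro n. destruct (Hun n) as [_ [_ K]]. unfold Th, s in *.
    assert (0 < / (INR n + 1)) by (apply Rinv_0_lt_compat; pose proof (pos_INR n); lra). lra.
  - specialize (Hmin l Hl Hlu). unfold Th in Hlm. lra.
Qed.
Lemma half_upper phi theta p q w : HalfHyp phi theta p q w ->
  forall u0, w - PI <= u0 <= w -> forall e, 0 < e -> exists d, 0 < d /\
  forall u, w - PI <= u <= w -> Rabs (u - u0) < d ->
    theta (selt phi theta p q u) < theta (selt phi theta p q u0) + e.
Proof.
  intros H u0 Hu0 e He.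
  pose proof (selt_spec _ _ _ _ _ H) as Sp.
  pose proof (half_S1 _ _ _ _ _ H) as S1.
  pose proof (half_cos _ _ _ _ _ H) as Hcos.
  destruct (Sp u0 Hu0) as [Ht [Et [_ Dt]]].
  set (ts := selt phi theta p q u0) in *.
  destruct H as (Hpq&Hphi&Hth&Hc&Hs&Hr&Hb&Hp&Hq&Hloc).
  destruct (Rle_lt_or_eq_dec _ _ Dt) as [Dlt|Deq].
  -
    destruct (proj1 (Hloc ts Ht)) as [d0 [Hd0 K]]. { rewrite Et; auto. }
    destruct (Hth ts Ht e He) as [dt [Hdt Kt]].
    set (r := Rmin d0 dt / 2).
    assert (Hr0 : 0 < r) by (unfold r; pose proof (Rmin_pos _ _ Hd0 Hdt); lra).
    assert (Hr1 : r < d0) by (unfold r; pose proof (Rmin_l d0 dt); lra).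
    assert (Hr2 : r < dt) by (unfold r; pose proof (Rmin_r d0 dt); lra).
    assert (A : exists dA, 0 < dA /\ forall u, w - PI <= u <= w -> u <= u0 -> u0 - u < dA ->
               theta (selt phi theta p q u) < theta ts + e).
    { destruct (Req_dec ts q) as [E|E].
      - exists 1. split; [lra|]. intros u Hu Hle _.
        assert (u = u0) by (rewrite E, Hq in Et; lra). subst u. fold ts. lra.
      - set (sp := Rmin (ts + r) q).
        assert (sp1 : sp <= ts + r) by apply Rmin_l.
        assert (sp2 : sp <= q) by apply Rmin_r.
        assert (sp3 : ts < sp) by (unfold sp; apply Rmin_glb_lt; lra).
        destruct (K sp ltac:(lra)) as [K1 _]. specialize (K1 ltac:(lra)).
        exists (u0 - phi sp). split; [lra|]. intros u Hu Hle Hlt.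
        destruct (IVT_down phi ts sp u) as [s [Hs1 Hs2]].
        + apply (cc_sub phi p q); auto; lra.
        + lra.
        + lra.
        + lra.
        + destruct (Sp u Hu) as [_ [_ [Hm _]]].
          specialize (Hm s ltac:(lra) Hs2).
          assert (Kt' : Rabs (theta s - theta ts) < e) by (apply Kt; [lra|]; apply Rabs_def1; lra).
          apply Rabs_def2 in Kt'. lra. }
    assert (B : exists dB, 0 < dB /\ forall u, w - PI <= u <= w -> u0 <= u -> u - u0 < dB ->
               theta (selt phi theta p q u) < theta ts + e).
    { destruct (Req_dec ts p) as [E|E].
      - exists 1. split; [lra|]. intros u Hu Hle _.
        assert (u = u0) by (rewrite E, Hp in Et; lra). subst u. fold ts. lra.
      - set (sm := Rmax (ts - r) p).
        assert (sm1 : ts - r <= sm) by apply Rmax_l.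
        assert (sm2 : p <= sm) by apply Rmax_r.
        assert (sm3 : sm < ts) by (unfold sm; apply Rmax_lub_lt; lra).
        destruct (K sm ltac:(lra)) as [_ K2]. specialize (K2 ltac:(lra)).
        exists (phi sm - u0). split; [lra|]. intros u Hu Hle Hlt.
        destruct (IVT_down phi sm ts u) as [s [Hs1 Hs2]].
        + apply (cc_sub phi p q); auto; lra.
        + lra.
        + lra.
        + lra.
        + destruct (Sp u Hu) as [_ [_ [Hm _]]].
          specialize (Hm s ltac:(lra) Hs2).
          assert (Kt' : Rabs (theta s - theta ts) < e) by (apply Kt; [lra|]; apply Rabs_def1; lra).
          apply Rabs_def2 in Kt'. lra. }
    destruct A as [dA [HdA KA]]. destruct B as [dB [HdB KB]].
    exists (Rmin dA dB). split; [apply Rmin_pos; auto|].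
    intros u Hu Hd. apply Rabs_def2 in Hd.
    pose proof (Rmin_l dA dB). pose proof (Rmin_r dA dB).
    destruct (Rle_dec u u0).
    + apply KA; auto; lra.
    + apply KB; auto; lra.
  -
    assert (Hcu0 : cos u0 <> 0).
    { intro C. rewrite Dv_cos0 in Deq; auto. lra. }
    assert (Hcp : 0 < cos u0) by (destruct (Hcos u0 Hu0); [auto|congruence]).
    destruct (Hr ts Ht) as [Hth1 Hth2].
    set (th := theta ts) in *.
    set (the := Rmin (th + e) ((th + PI/2)/2)).
    assert (e1 : the <= th + e) by apply Rmin_l.
    assert (e2 : the <= (th + PI/2)/2) by apply Rmin_r.
    assert (e3 : th < the) by (unfold the; apply Rmin_glb_lt; lra).
    set (T := tan the).
    assert (HT : tan th < T) by (apply tan_increasing; lra).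
    assert (Hk : 0 < cos u0 * T - sin u0 ^ 2).
    { unfold Dv in Deq. assert (cos u0 * tan th < cos u0 * T) by (apply Rmult_lt_compat_l; auto). lra. }
    assert (Ck : continuity_pt (fun u => cos u * T - sin u ^ 2) u0) by reg.
    destruct (cpt_ed _ _ Ck _ Hk) as [d1 [Hd1 K1]].
    destruct (cpt_ed _ _ (continuity_cos u0) _ Hcp) as [d2 [Hd2 K2]].
    exists (Rmin d1 d2). split; [apply Rmin_pos; auto|].
    intros u Hu Hd.
    pose proof (Rmin_l d1 d2). pose proof (Rmin_r d1 d2).
    specialize (K1 u ltac:(lra)). specialize (K2 u ltac:(lra)).
    apply Rabs_def2 in K1. apply Rabs_def2 in K2.
    destruct (S1 u Hu) as [t' [Ht' [Et' Dt']]].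
    destruct (Sp u Hu) as [_ [_ [Hm _]]].
    specialize (Hm t' Ht' Et').
    assert (tan (theta t') < T).
    { unfold Dv in Dt'. apply (Rmult_lt_reg_l (cos u)); lra. }
    assert (theta t' < the).
    { apply Rnot_le_lt. intro Hle. destruct (Hr t' Ht').
      assert (T <= tan (theta t')) by (apply tan_le; lra). lra. }
    lra.
Qed.

Lemma half_cont phi theta p q w : HalfHyp phi theta p q w ->
  cc (fun u => theta (selt phi theta p q u)) (w - PI) w.
Proof.
  intros H u0 Hu0 e He.
  destruct (half_upper _ _ _ _ _ H u0 Hu0 e He) as [d1 [Hd1 K1]].
  destruct (half_lower _ _ _ _ _ H u0 Hu0 e He) as [d2 [Hd2 K2]].
  exists (Rmin d1 d2). split; [apply Rmin_pos; auto|].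
  intros u Hu Hd. pose proof (Rmin_l d1 d2). pose proof (Rmin_r d1 d2).
  specialize (K1 u Hu ltac:(lra)). specialize (K2 u Hu ltac:(lra)).
  apply Rabs_def1; lra.
Qed.
Lemma Psph_norm a b : sqnorm3 (Psph a b) = 1.
Proof.
  unfold sqnorm3, Psph.
  pose proof (sin2_cos2 a) as Ha. pose proof (sin2_cos2 b) as Hb. unfold Rsqr in *.
  replace ((cos b * cos a) ^ 2 + (cos b * sin a) ^ 2 + sin b ^ 2)
    with (cos b * cos b * (sin a * sin a + cos a * cos a) + sin b * sin b) by ring.
  rewrite Ha. lra.
Qed.

Lemma pt_facts y dy ddy a b t :
  kappa y dy ddy t <> north_pole /\ kappa y dy ddy t <> south_pole ->
  - (PI / 2) <= b <= PI / 2 ->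
  kappa y dy ddy t = Psph a b ->
  exists n, 0 < n /\ 0 < cos b /\ - (PI/2) < b < PI/2 /\
  y t = n * cos b * cos a /\
  dy t = n * cos b * sin a /\
  ddy t = n * sin b.
Proof.
  intros [Hn Hs] Hb Hk.
  pose proof (Psph_norm a b) as Hnorm.
  set (n := norm3 (y t, dy t, ddy t)) in *.
  unfold kappa, Psph in Hk. fold n in Hk. injection Hk as E1 E2 E3.
  assert (Hn0 : 0 <= n) by apply sqrt_pos.
  assert (Hnp : 0 < n).
  { destruct Hn0 as [|E]; auto. exfalso. rewrite <- E in *.
    unfold Rdiv in *. rewrite Rinv_0 in *. rewrite !Rmult_0_r in *.
    unfold sqnorm3, Psph in Hnorm. rewrite <- E1, <- E2, <- E3 in Hnorm. lra. }
  assert (Hc0 : 0 <= cos b) by (apply cos_ge_0; lra).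
  assert (Hcp : 0 < cos b).
  { destruct Hc0 as [|E]; auto. exfalso.
    pose proof (sin2_cos2 b) as Hsc. rewrite <- E in Hsc. unfold Rsqr in Hsc.
    assert (Hsb : sin b = 1 \/ sin b = -1) by (destruct (Req_dec (sin b) 1); [left|right]; nra).
    unfold kappa in Hn, Hs. fold n in Hn, Hs.
    rewrite E1, E2, E3, <- E in Hn, Hs. unfold north_pole, south_pole in *.
    rewrite !Rmult_0_l in Hn, Hs.
    destruct Hsb as [S|S]; rewrite S in *; auto. }
  assert (Hb' : - (PI/2) < b < PI/2).
  { split; destruct Hb as [Hb1 Hb2].
    - destruct Hb1 as [|E]; auto. rewrite <- E in Hcp. rewrite cos_neg, cos_PI2 in Hcp. lra.
    - destruct Hb2 as [|E]; auto. rewrite E in Hcp. rewrite cos_PI2 in Hcp. lra. }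
  exists n. split; auto. split; auto. split; auto.
  split; [|split].
  - rewrite Rmult_assoc, <- E1. field. lra.
  - rewrite Rmult_assoc, <- E2. field. lra.
  - rewrite <- E3. field. lra.
Qed.

Lemma deriv_sign f t l : derivable_pt_lim f t l -> 0 < l ->
  exists d, 0 < d /\ forall s, (t < s < t + d -> f s > f t) /\ (t - d < s < t -> f s < f t).
Proof.
  intros H Hl. destruct (H l Hl) as [d Hd]. exists d. split; [apply cond_pos|].
  intros s. assert (K : s <> t -> Rabs (s - t) < d -> (f s - f t) / (s - t) > 0).
  { intros Hst Hab. specialize (Hd (s - t) ltac:(lra) Hab).
    replace (t + (s - t)) with s in Hd by ring. apply Rabs_def2 in Hd. lra. }
  split; intros Hs.
  - specialize (K ltac:(lra) ltac:(apply Rabs_def1; lra)).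
    assert (0 < s - t) by lra.
    assert (f s - f t = (f s - f t) / (s - t) * (s - t)) by (field; lra). nra.
  - specialize (K ltac:(lra) ltac:(apply Rabs_def1; lra)).
    assert (s - t < 0) by lra.
    assert (f s - f t = (f s - f t) / (s - t) * (s - t)) by (field; lra). nra.
Qed.

Lemma sin_sign x : Rabs x < PI -> (sin x > 0 -> x > 0) /\ (sin x < 0 -> x < 0).
Proof.
  intros Hx. apply Rabs_def2 in Hx. split; intro Hs.
  - apply Rnot_le_lt. intro Hle. destruct Hle as [Hlt|E].
    + pose proof (sin_lt_0_var x ltac:(lra) Hlt). lra.
    + subst. rewrite sin_0 in Hs. lra.
  - apply Rnot_le_lt. intro Hle. pose proof (sin_ge_0 x Hle ltac:(lra)). lra.
Qed.

Lemma loc_prop y dy ddy phi theta t0 t1 : 0 < t0 ->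
  (forall t, 0 < t -> is_derive y t (dy t)) ->
  (forall t, 0 < t -> is_derive dy t (ddy t)) ->
  (forall t, t0 <= t <= t1 -> kappa y dy ddy t <> north_pole /\ kappa y dy ddy t <> south_pole) ->
  (forall t, t0 <= t <= t1 -> - (PI / 2) <= theta t <= PI / 2) ->
  (forall t, t0 <= t <= t1 -> kappa y dy ddy t = Psph (phi t) (theta t)) ->
  cc phi t0 t1 ->
  forall t, t0 <= t <= t1 ->
    (Dv (phi t) (theta t) < 0 -> locdec phi t0 t1 t) /\
    (Dv (phi t) (theta t) > 0 -> locinc phi t0 t1 t).
Proof.
  intros Ht0 Hy Hdy Hnp Hr Hrep Hphi t Ht.
  set (N := fun s => y t * dy s - dy t * y s).
  assert (HN : derivable_pt_lim N t (y t * ddy t - dy t * dy t)).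
  { apply (derivable_pt_lim_minus (mult_real_fct (y t) dy) (mult_real_fct (dy t) y)).
    - apply derivable_pt_lim_scal. apply is_derive_Reals. apply Hdy. lra.
    - apply derivable_pt_lim_scal. apply is_derive_Reals. apply Hy. lra. }
  destruct (pt_facts y dy ddy (phi t) (theta t) t (Hnp t Ht) (Hr t Ht) (Hrep t Ht))
    as [n [Hn [Hc [_ [Ey [Edy Eddy]]]]]].
  assert (Hl : y t * ddy t - dy t * dy t = n * n * cos (theta t) * cos (theta t) * Dv (phi t) (theta t)).
  { rewrite Ey, Edy, Eddy. unfold Dv, tan. field. lra. }
  assert (HNs : forall s, t0 <= s <= t1 -> exists ns, 0 < ns * n * cos (theta s) * cos (theta t) /\ N s =
     ns * n * cos (theta s) * cos (theta t) * sin (phi s - phi t)).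
  { intros s Hs.
    destruct (pt_facts y dy ddy (phi s) (theta s) s (Hnp s Hs) (Hr s Hs) (Hrep s Hs))
      as [ns [Hns [Hcs [_ [Ey' [Edy' _]]]]]].
    exists ns. split. { repeat apply Rmult_lt_0_compat; auto. }
    unfold N. rewrite sin_minus. rewrite Ey, Edy, Ey', Edy'. ring. }
  assert (HNt : N t = 0) by (unfold N; ring).
  destruct (Hphi t Ht PI PI_RGT_0) as [d2 [Hd2 Hcont]].
  split; intro HD.
  - assert (Hlneg : y t * ddy t - dy t * dy t < 0).
    { rewrite Hl. assert (0 < n * n * cos (theta t) * cos (theta t)) by (repeat apply Rmult_lt_0_compat; auto).
      nra. }
    apply derivable_pt_lim_opp in HN.
    destruct (deriv_sign _ _ _ HN ltac:(lra)) as [d1 [Hd1 K]].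
    exists (Rmin d1 d2). split; [apply Rmin_pos; auto|].
    intros s Hs. pose proof (Rmin_l d1 d2). pose proof (Rmin_r d1 d2).
    specialize (Hcont s Hs). destruct (HNs s Hs) as [ns [P E]].
    destruct (K s) as [K1 K2]. unfold opp_fct in K1, K2.
    split; intro Hst.
    + specialize (K1 ltac:(lra)). specialize (Hcont ltac:(apply Rabs_def1; lra)).
      assert (sin (phi s - phi t) < 0) by nra.
      pose proof (proj2 (sin_sign _ Hcont) H1). lra.
    + specialize (K2 ltac:(lra)). specialize (Hcont ltac:(apply Rabs_def1; lra)).
      assert (sin (phi s - phi t) > 0) by nra.
      pose proof (proj1 (sin_sign _ Hcont) H1). lra.
  - assert (Hlpos : y t * ddy t - dy t * dy t > 0).
    { rewrite Hl. assert (0 < n * n * cos (theta t) * cos (theta t)) by (repeat apply Rmult_lt_0_compat; auto).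
      nra. }
    destruct (deriv_sign _ _ _ HN ltac:(lra)) as [d1 [Hd1 K]].
    exists (Rmin d1 d2). split; [apply Rmin_pos; auto|].
    intros s Hs. pose proof (Rmin_l d1 d2). pose proof (Rmin_r d1 d2).
    specialize (Hcont s Hs). destruct (HNs s Hs) as [ns [P E]].
    destruct (K s) as [K1 K2].
    split; intro Hst.
    + specialize (K1 ltac:(lra)). specialize (Hcont ltac:(apply Rabs_def1; lra)).
      assert (sin (phi s - phi t) > 0) by nra.
      pose proof (proj1 (sin_sign _ Hcont) H1). lra.
    + specialize (K2 ltac:(lra)). specialize (Hcont ltac:(apply Rabs_def1; lra)).
      assert (sin (phi s - phi t) < 0) by nra.
      pose proof (proj2 (sin_sign _ Hcont) H1). lra.
Qed.
Lemma half phi theta p q w : HalfHyp phi theta p q w ->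
  exists Th : R -> R, cc Th (w - PI) w /\ Th w = theta p /\ Th (w - PI) = theta q /\
  forall u, w - PI <= u <= w -> exists t, p <= t <= q /\ phi t = u /\ theta t = Th u /\ Dv u (theta t) <= 0.
Proof.
  intros H. exists (fun u => theta (selt phi theta p q u)).
  split; [apply (half_cont _ _ _ _ _ H)|].
  split; [rewrite (half_end1 _ _ _ _ _ H); auto|].
  split; [rewrite (half_end2 _ _ _ _ _ H); auto|].
  intros u Hu. destruct (selt_spec _ _ _ _ _ H u Hu) as [A [B [_ D]]].
  exists (selt phi theta p q u). auto.
Qed.

Lemma periodic_pi2 k : cos (PI/2 + 2 * PI * IZR k) = 0 /\ sin (PI/2 + 2 * PI * IZR k) = 1.
Proof.
  destruct (Z.le_ge_cases 0 k) as [Hk|Hk].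
  - destruct (Z_of_nat_complete k Hk) as [n ->]. rewrite <- INR_IZR_INZ.
    replace (PI/2 + 2 * PI * INR n) with (PI/2 + 2 * INR n * PI) by ring.
    rewrite cos_period, sin_period, cos_PI2, sin_PI2. auto.
  - destruct (Z_of_nat_complete (- k) ltac:(lia)) as [n Hn].
    assert (E : IZR k = - INR n) by (rewrite INR_IZR_INZ, <- Hn, opp_IZR; ring).
    rewrite E.
    set (x := PI/2 + 2 * PI * - INR n).
    rewrite <- (cos_period x n), <- (sin_period x n).
    replace (x + 2 * INR n * PI) with (PI/2) by (unfold x; ring).
    rewrite cos_PI2, sin_PI2. auto.
Qed.

Lemma Dv_shift a b : Dv (a + PI) (- b) = Dv a b.
Proof. unfold Dv. rewrite neg_cos, neg_sin, tan_neg. ring. Qed.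

Lemma notOmega a b : cos b <> 0 -> Dv a b <= 0 -> ~ InOmega (Psph a b).
Proof.
  intros Hc HD [_ HO]. unfold Psph in HO. unfold Dv, tan in HD.
  assert (E : cos b * cos a * sin b - (cos b * sin a) ^ 2 =
     cos b * cos b * (cos a * (sin b / cos b) - sin a ^ 2)) by (field; auto).
  rewrite E in HO. assert (0 < cos b * cos b) by (apply Rsqr_pos_lt in Hc; exact Hc).
  nra.
Qed.

Lemma locdec_sub f a b a' b' t : locdec f a b t -> a <= a' -> b' <= b -> locdec f a' b' t.
Proof. intros [d [Hd H]] H1 H2. exists d; split; auto. intros s Hs. apply H; lra. Qed.

Lemma locinc_sub f a b a' b' t : locinc f a b t -> a <= a' -> b' <= b -> locinc f a' b' t.
Proof. intros [d [Hd H]] H1 H2. exists d; split; auto. intros s Hs. apply H; lra. Qed.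

Lemma locdec_shift f a b t c : locdec f a b t -> locdec (fun x => f x + c) a b t.
Proof. intros [d [Hd H]]. exists d; split; auto. intros s Hs. destruct (H s Hs). split; intro; [specialize (H0 H2)|specialize (H1 H2)]; lra. Qed.

Lemma locinc_shift f a b t c : locinc f a b t -> locinc (fun x => f x + c) a b t.
Proof. intros [d [Hd H]]. exists d; split; auto. intros s Hs. destruct (H s Hs). split; intro; [specialize (H0 H2)|specialize (H1 H2)]; lra. Qed.

Lemma cc_shift f a b c : cc f a b -> cc (fun x => f x + c) a b.
Proof.
  intros Hf t Ht e He. destruct (Hf t Ht e He) as [d [Hd H]]. exists d; split; auto.
  intros s Hs Hst. replace (f s + c - (f t + c)) with (f s - f t) by ring. auto.
Qed.
Theorem lemma3
  (a b c : R -> R)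
  (Ha : forall t, 0 < t -> continuous a t)
  (Hb : forall t, 0 < t -> continuous b t)
  (Hc : forall t, 0 < t -> continuous c t)
  (y dy ddy : R -> R)
  (Hy : forall t, 0 < t -> is_derive y t (dy t))
  (Hdy : forall t, 0 < t -> is_derive dy t (ddy t))
  (Hddy : forall t, 0 < t ->
     is_derive ddy t (- (a t * ddy t + b t * dy t + c t * y t)))
  (Hnz : exists t, 0 < t /\ y t <> 0)
  (t0 t1 : R) (Ht0 : 0 < t0) (Ht01 : t0 <= t1)
  (Hnopole : forall t, t0 <= t <= t1 ->
     kappa y dy ddy t <> north_pole /\ kappa y dy ddy t <> south_pole)
  (phi theta : R -> R)
  (Hphi : cont_on phi t0 t1) (Htheta : cont_on theta t0 t1)
  (Hrange : forall t, t0 <= t <= t1 -> - (PI / 2) <= theta t <= PI / 2)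
  (Hrep : forall t, t0 <= t <= t1 -> kappa y dy ddy t = Psph (phi t) (theta t))
  (Hphi0 : exists k : Z, phi t0 = PI / 2 + 2 * PI * IZR k)
  (Hphi1 : phi t1 = phi t0 - 2 * PI) :
  exists kt : R -> pt3,
    cont_on kt 0 1 /\
    (forall s, 0 <= s <= 1 -> InS2 (kt s) /\ ~ InOmega (kt s)) /\
    kt 0 = kappa y dy ddy t0 /\
    kt 1 = kappa y dy ddy t1 /\
    (forall s, 0 <= s <= 1 -> exists t, t0 <= t <= t1 /\ kt s = kappa y dy ddy t).
Proof.
  pose proof PI_RGT_0 as HPI.
  destruct Hphi0 as [k Hk].
  set (v0 := phi t0) in *.
  assert (Hcv0 : cos v0 = 0 /\ sin v0 = 1) by (rewrite Hk; apply periodic_pi2).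
  destruct Hcv0 as [Hc0 Hs0].
  assert (Hc1 : cos (v0 - PI) = 0) by (rewrite cos_minus, Hc0, Hs0, sin_PI; ring).
  assert (Hc2 : cos (v0 - 2 * PI) = 0) by (rewrite cos_minus, Hc0, Hs0, sin_2PI; ring).
  pose proof (cont_on_cc phi t0 t1 Hphi) as Hphi'.
  pose proof (cont_on_cc theta t0 t1 Htheta) as Hth'.
  pose proof (loc_prop y dy ddy phi theta t0 t1 Ht0 Hy Hdy Hnopole Hrange Hrep Hphi') as Hloc.
  assert (Hthr : forall t, t0 <= t <= t1 -> - (PI/2) < theta t < PI/2 /\ 0 < cos (theta t)).
  { intros t Ht. destruct (pt_facts y dy ddy (phi t) (theta t) t (Hnopole t Ht) (Hrange t Ht) (Hrep t Ht))
      as [n [_ [Hct [Hr _]]]]. auto. }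
  assert (LD : forall c0, cos c0 = 0 -> forall t, t0 <= t <= t1 -> phi t = c0 -> locdec phi t0 t1 t).
  { intros c0 Hcz t Ht Et. apply (proj1 (Hloc t Ht)). rewrite Et, Dv_cos0; auto; lra. }
  assert (HA : forall s, t0 < s <= t1 -> phi s < v0).
  { apply (cross_down phi t0 t1 v0 Hphi' Ht01); [unfold v0; lra|].
    intros t Ht Et. apply (LD v0); auto. }
  assert (HB : forall s, t0 <= s <= t1 -> v0 - 2 * PI <= phi s).
  { intros s Hs. apply Rnot_lt_le. intro Hlt.
    destruct (Req_dec s t1) as [E|E]. { subst s. lra. }
    assert (K := cross_down phi s t1 (v0 - 2 * PI) (cc_sub phi t0 t1 s t1 Hphi' ltac:(lra) ltac:(lra))
      ltac:(lra) ltac:(lra)).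
    assert (phi t1 < v0 - 2 * PI); [|lra].
    apply K; [|lra]. intros t Ht Et. apply (locdec_sub phi t0 t1); [|lra|lra].
    apply (LD (v0 - 2 * PI)); auto; lra. }
  destruct (IVT_down phi t0 t1 (v0 - PI) Hphi' Ht01 ltac:(unfold v0; lra) ltac:(lra)) as [m [Hm Em]].
  assert (HD : forall s, m <= s <= t1 -> phi s <= v0 - PI).
  { intros s Hs. destruct (Req_dec s m) as [E|E]. { subst s. lra. }
    left. apply (cross_down phi m t1 (v0 - PI) (cc_sub phi t0 t1 m t1 Hphi' ltac:(lra) ltac:(lra))); [lra|lra| |lra].
    intros t Ht Et. apply (locdec_sub phi t0 t1); [|lra|lra].
    apply (LD (v0 - PI)); auto; lra. }
  assert (HE : forall s, t0 <= s <= m -> v0 - PI <= phi s).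
  { intros s Hs. apply Rnot_lt_le. intro Hlt.
    destruct (Req_dec s m) as [E|E]. { subst s. lra. }
    assert (phi m < v0 - PI); [|lra].
    apply (cross_down phi s m (v0 - PI) (cc_sub phi t0 t1 s m Hphi' ltac:(lra) ltac:(lra))); [lra|lra| |lra].
    intros t Ht Et. apply (locdec_sub phi t0 t1); [|lra|lra].
    apply (LD (v0 - PI)); auto; lra. }
  assert (H1 : HalfHyp phi theta t0 m v0).
  { split; [lra|]. split; [apply (cc_sub phi t0 t1); auto; lra|].
    split; [apply (cc_sub theta t0 t1); auto; lra|].
    split; auto. split; auto.
    split; [intros t Ht; apply Hthr; lra|].
    split. { intros t Ht. split; [apply HE; auto|].
             destruct (Req_dec t t0) as [E|E]; [subst t; unfold v0; lra|]. left; apply HA; lra. }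
    split; auto. split; auto.
    intros t Ht. destruct (Hloc t ltac:(lra)) as [L1 L2]. split; intro HDv.
    - apply (locdec_sub phi t0 t1); auto; lra.
    - apply (locinc_sub phi t0 t1); auto; lra. }
  assert (H2 : HalfHyp (fun t => phi t + PI) (fun t => - theta t) m t1 v0).
  { split; [lra|]. split; [apply cc_shift; apply (cc_sub phi t0 t1); auto; lra|].
    split; [apply cc_opp; apply (cc_sub theta t0 t1); auto; lra|].
    split; auto. split; auto.
    split; [intros t Ht; destruct (Hthr t ltac:(lra)); lra|].
    split. { intros t Ht. pose proof (HD t Ht). pose proof (HB t ltac:(lra)). lra. }
    split; [lra|]. split; [lra|].
    intros t Ht. rewrite Dv_shift. destruct (Hloc t ltac:(lra)) as [L1 L2]. split; intro HDv.
    - apply locdec_shift. apply (locdec_sub phi t0 t1); auto; lra.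
    - apply locinc_shift. apply (locinc_sub phi t0 t1); auto; lra. }
  destruct (half _ _ _ _ _ H1) as [Th1 [C1 [E1a [E1b Im1]]]].
  destruct (half _ _ _ _ _ H2) as [Th2 [C2 [E2a [E2b Im2]]]].
  set (U := fun s => v0 + (-2 * PI) * s).
  set (U2 := fun s => (v0 + PI) + (-2 * PI) * s).
  set (G := fun s => if Rle_dec s (1/2) then Th1 (U s) else - Th2 (U2 s)).
  assert (RU : forall s, 0 <= s <= 1/2 -> v0 - PI <= U s <= v0).
  { intros s Hs. unfold U. nra. }
  assert (RU2 : forall s, 1/2 <= s <= 1 -> v0 - PI <= U2 s <= v0).
  { intros s Hs. unfold U2. nra. }
  assert (CG : cc G 0 1).
  { apply cc_glue; [lra| | |].
    - apply (cc_compose Th1 U (v0 - PI) v0); auto. apply cc_affine.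
    - apply cc_opp. apply (cc_compose Th2 U2 (v0 - PI) v0); auto. apply cc_affine.
    - unfold U, U2. replace (v0 + -2 * PI * (1/2)) with (v0 - PI) by field.
      replace (v0 + PI + -2 * PI * (1/2)) with v0 by field.
      rewrite E1b, E2a. ring. }
  exists (fun s => Psph (U s) (G s)).
  split.
  { unfold Psph. apply cc_cont_on3.
    - apply cc_mult. apply (cc_comp cos G 0 1 continuity_cos CG).
      apply (cc_comp cos U 0 1 continuity_cos). apply cc_affine.
    - apply cc_mult. apply (cc_comp cos G 0 1 continuity_cos CG).
      apply (cc_comp sin U 0 1 continuity_sin). apply cc_affine.
    - apply (cc_comp sin G 0 1 continuity_sin CG). }
  assert (Img : forall s, 0 <= s <= 1 -> exists t, t0 <= t <= t1 /\
      Psph (U s) (G s) = Psph (phi t) (theta t) /\ Dv (phi t) (theta t) <= 0).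
  { intros s Hs. unfold G. destruct (Rle_dec s (1/2)) as [Hle|Hgt].
    - destruct (Im1 (U s) (RU s ltac:(lra))) as [t [Ht [Et [Tt Dt]]]].
      exists t. split; [lra|]. rewrite <- Tt, <- Et. split; auto. rewrite Et; auto.
    - apply Rnot_le_lt in Hgt. destruct (Im2 (U2 s) (RU2 s ltac:(lra))) as [t [Ht [Et [Tt Dt]]]].
      exists t. split; [lra|]. rewrite <- Et, Dv_shift in Dt. split; auto.
      rewrite <- Tt. rewrite Ropp_involutive.
      f_equal. unfold U, U2 in *. lra. }
  split.
  { intros s Hs. destruct (Img s Hs) as [t [Ht [Et Dt]]]. rewrite Et.
    split; [apply Psph_norm|]. apply notOmega; auto.
    destruct (Hthr t Ht) as [_ Hct]. lra. }
  split.
  { unfold G. destruct (Rle_dec 0 (1/2)) as [_|N]; [|lra].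
    unfold U. replace (v0 + -2 * PI * 0) with v0 by ring. rewrite E1a.
    symmetry. apply Hrep. lra. }
  split.
  { unfold G. destruct (Rle_dec 1 (1/2)) as [N|_]; [lra|].
    unfold U, U2. replace (v0 + PI + -2 * PI * 1) with (v0 - PI) by ring. rewrite E2b.
    rewrite Ropp_involutive. replace (v0 + -2 * PI * 1) with (phi t1) by (rewrite Hphi1; unfold v0; ring).
    symmetry. apply Hrep. lra. }
  intros s Hs. destruct (Img s Hs) as [t [Ht [Et Dt]]]. exists t. split; auto.
  rewrite Et. symmetry. apply Hrep; auto.
Qed.
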